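(* For a topological space $X$ with a locally countable $\pi$-base, the game $\mathsf{BM}_\omega(X)$ is determined, i.e. one of the two players has a winning strategy.
   Context: A family $\mathcal{B}$ of non-empty open sets of $X$ is a $\pi$-base if every non-empty open set of $X$ contains a member of $\mathcal{B}$; it is locally countable if each member of $\mathcal{B}$ contains only countably many members of $\mathcal{B}$. The game $\mathsf{BM}_\omega(X)$: \textsc{Alice} plays a non-empty open set $A_0$; \textsc{Bob} plays a countable collection $\mathcal{B}_0$ of non-empty open subsets of $A_0$; in inning $n+1$, for each $B \in \mathcal{B}_n$ \textsc{Alice} plays a non-empty open set $A_B \subseteq B$, letting $\mathcal{A}_{n+1}=\{A_B : B\in\mathcal{B}_n\}$, and \textsc{Bob} plays a countable collection $\mathcal{B}_{n+1}$ of non-empty open subsets of $\bigcup\mathcal{A}_{n+1}$. \textsc{Bob} wins if $\bigcap_{n}\bigcup\mathcal{B}_n\neq\emptyset$, otherwise \textsc{Alice} wins. *)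

(* Defs.v *)
From mathcomp Require Import all_boot all_order.
From mathcomp Require Import all_classical all_reals all_analysis.
Set Implicit Arguments. Unset Strict Implicit. Unset Printing Implicit Defensive.
Local Open Scope classical_set_scope.

Section BMomega.
Variable T : topologicalType.

Definition pi_base (B : set (set T)) : Prop :=
  (forall U, B U -> open U /\ U !=set0) /\
  (forall V, open V -> V !=set0 -> exists2 U, B U & U `<=` V).

Definition locally_countable (B : set (set T)) : Prop :=
  forall U, B U -> countable [set W | B W /\ W `<=` U].

(* Round n (n >= 0): given Bob's previous
   collection C (with the convention that before round 0 it is [set setT]),
   Alice plays a family a : set T -> set T, i.e. a set A_B = a B for each
   B in C (and a B = set0 for B not in C, so moves are canonical).
   Round 0 thus is Alice playing A_0 = a setT. *)
Definition alice_legal (C : set (set T)) (a : set T -> set T) : Prop :=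
  (forall B, C B -> [/\ open (a B), a B !=set0 & a B `<=` B]) /\
  (forall B, ~ C B -> a B = set0).

Definition bob_legal (C : set (set T)) (a : set T -> set T)
    (D : set (set T)) : Prop :=
  countable D /\
  (forall B, D B -> [/\ open B, B !=set0 & B `<=` \bigcup_(E in C) a E]).

Definition prev_coll (c : nat -> set (set T)) (n : nat) : set (set T) :=
  if n is m.+1 then c m else [set setT].

Definition bob_wins_play (c : nat -> set (set T)) : Prop :=
  \bigcap_n (\bigcup_(B in c n) B) !=set0.

(* Perfect-information strategies. Alice sees Bob's previous moves;
   Bob sees Alice's moves so far (including the current one). *)
Definition alice_strategy := seq (set (set T)) -> (set T -> set T).
Definition bob_strategy := seq (set T -> set T) -> set (set T).

Definition alice_winning (sigma : alice_strategy) : Prop :=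
  forall c : nat -> set (set T),
    let a := fun n => sigma (mkseq c n) in
    (forall n, (forall k, (k < n)%N -> bob_legal (prev_coll c k) (a k) (c k)) ->
        alice_legal (prev_coll c n) (a n)) /\
    ((forall n, bob_legal (prev_coll c n) (a n) (c n)) -> ~ bob_wins_play c).

Definition bob_winning (tau : bob_strategy) : Prop :=
  forall a : nat -> (set T -> set T),
    let c := fun n => tau (mkseq a n.+1) in
    (forall n, (forall k, (k <= n)%N -> alice_legal (prev_coll c k) (a k)) ->
        bob_legal (prev_coll c n) (a n) (c n)) /\
    ((forall n, alice_legal (prev_coll c n) (a n)) -> bob_wins_play c).

Definition BM_omega_determined : Prop :=
  (exists sigma, alice_winning sigma) \/ (exists tau, bob_winning tau).

End BMomega.

(* Main.v *)
Require Import Defs.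
From mathcomp Require Import all_boot all_order.
From mathcomp Require Import all_classical all_reals all_analysis.
Local Open Scope classical_set_scope.

Set Implicit Arguments.
Section Aux.
Variable T : topologicalType.

Definition pickW (P : set T -> Prop) : set T :=
  match pselect (exists W, P W) with
  | left h => projT1 (cid h)
  | right _ => set0
  end.

Lemma pickWP P : (exists W, P W) -> P (pickW P).
Proof.
move=> h; rewrite /pickW; case: pselect => // h'.
exact: (projT2 (cid h')).
Qed.

Lemma pickW0 P : ~ (exists W, P W) -> pickW P = set0.
Proof. by move=> h; rewrite /pickW; case: pselect. Qed.

Definition good (W : set T) : Prop :=
  forall G : nat -> set T, (forall n, open (G n)) ->
    (forall n V, open V -> V !=set0 -> V `<=` W -> V `&` G n !=set0) ->
    W `&` \bigcap_n G n !=set0.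

Variable B : set (set T).

Definition below (W : set T) := [set W' | B W' /\ W' `<=` W].
Definition pB (A : set T) := pickW (fun W => B W /\ W `<=` A).
Definition pQ (A : set T) := pickW (fun W => B W /\ W `<=` A /\ good W).

Fixpoint D (f : nat -> set T -> set T) (n : nat) : set (set T) :=
  match n with
  | 0 => below (pQ (f 0 setT))
  | m.+1 => \bigcup_(E in D f m) below (pB (f m.+1 E))
  end.

Lemma D_ext f g n : (forall k, (k <= n)%N -> f k = g k) -> D f n = D g n.
Proof.
elim: n => [|n IH] h /=; first by rewrite h.
rewrite IH; last by move=> k kn; apply: h; apply: leqW.
by rewrite h.
Qed.

Lemma pB_sub A : pB A `<=` A.
Proof.
rewrite /pB; have [h|h] := pselect (exists W, B W /\ W `<=` A).
  by case: (@pickWP _ h).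
by rewrite pickW0.
Qed.

Lemma pB_B A : B (pB A) \/ pB A = set0.
Proof.
rewrite /pB; have [h|h] := pselect (exists W, B W /\ W `<=` A).
  by left; case: (@pickWP _ h).
by right; rewrite pickW0.
Qed.

Lemma pQ_sub A : pQ A `<=` A.
Proof.
rewrite /pQ; have [h|h] := pselect (exists W, B W /\ W `<=` A /\ good W).
  by case: (@pickWP _ h) => _ [].
by rewrite pickW0.
Qed.

Lemma pQ_B A : B (pQ A) \/ pQ A = set0.
Proof.
rewrite /pQ; have [h|h] := pselect (exists W, B W /\ W `<=` A /\ good W).
  by left; case: (@pickWP _ h).
by right; rewrite pickW0.
Qed.

Hypothesis Bop : forall U, B U -> open U /\ U !=set0.
Hypothesis Blc : locally_countable B.

Lemma below_countable W : B W \/ W = set0 -> countable (below W).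
Proof.
case=> [/Blc //|->].
have -> : below set0 = set0.
  apply/seteqP; split => // W' [/Bop [_ [x Wx]] /(_ x Wx)] [].
exact: countable0.
Qed.

Lemma D_B f n E : D f n E -> B E.
Proof. by case: n => [|n] /=; [case|case=> F _ []]. Qed.

Lemma D_countable f n : countable (D f n).
Proof.
elim: n => [|n IH] /=; first by apply: below_countable; apply: pQ_B.
apply: bigcup_countable => // E _; apply: below_countable; apply: pB_B.
Qed.

End Aux.

Arguments good {T}. Arguments pickWP {T}. Arguments D {T}. Arguments pQ {T}. Arguments pB {T}.
Arguments D_B {T B f n E}. Arguments D_countable {T B} Bop Blc {f n}.
Theorem corollary3p9 (T : topologicalType) :
  (exists B : set (set T), pi_base B /\ locally_countable B) ->
  BM_omega_determined T.
Proof.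
move=> [B [[Bop Bpi] Blc]].
have [Q|nQ] := pselect (forall A : set T, open A -> A !=set0 ->
  exists W, B W /\ W `<=` A /\ good W).
- right.
  pose tau := fun s : seq (set T -> set T) =>
    D B (fun k => nth (fun _ => set0) s k) (size s).-1.
  exists tau => a /=.
  have cE n : tau (mkseq a n.+1) = D B a n.
    rewrite /tau size_mkseq /=; apply: D_ext => k kn.
    by rewrite nth_mkseq.
  split.
  + move=> n _; rewrite cE; split; first exact: (D_countable Bop Blc).
    move=> W hW; have [oW nW] := Bop _ (D_B hW); split => //.
    case: n hW => [|m] /=.
      move=> [_ sW] x /sW /pQ_sub ax; by exists setT.
    rewrite cE => -[E DE [_ sW]] x /sW /pB_sub ax; by exists E.
  + move=> leg.
    have [/= oA nA _] := (leg 0%N).1 setT erefl.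
    have [W0 [BW0 [W0A gW0]]] := Q _ oA nA.
    have := @pickWP _ (fun W => B W /\ W `<=` a 0%N setT /\ good W).
    move=> /(_ (ex_intro _ W0 (conj BW0 (conj W0A gW0)))).
    rewrite -/(pQ B _) => -[BW [WA gW]].
    have dens n V : open V -> V !=set0 -> V `<=` pQ B (a 0%N setT) ->
        exists E, D B a n E /\ E `<=` V.
      elim: n V => [|m IH] V oV nV sV.
        have [W' BW' W'V] := Bpi V oV nV.
        by exists W'; split => //=; split => //; apply: subset_trans sV.
      have [E [DE EV]] := IH V oV nV sV.
      have hE : tau (mkseq a m.+1) E by rewrite cE.
      have [/= oaE naE saE] := (leg m.+1).1 E hE.
      have [W1 BW1 W1a] := Bpi _ oaE naE.
      have := @pickWP _ (fun W => B W /\ W `<=` a m.+1 E).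
      move=> /(_ (ex_intro _ W1 (conj BW1 W1a))).
      rewrite -/(pB B _) => -[BW2 W2a].
      exists (pB B (a m.+1 E)); split; first by exists E => //; split.
      by apply: subset_trans EV; apply: subset_trans saE.
    have [x [_ hx]] : pQ B (a 0%N setT) `&`
        \bigcap_n (\bigcup_(E in D B a n) E) !=set0.
      apply: gW.
        move=> n; apply: bigcup_open => E /D_B /Bop [] //.
      move=> n V oV nV sV.
      have [E [DE EV]] := dens n V oV nV sV.
      have [_ [x Ex]] := Bop _ (D_B DE).
      by exists x; split; [apply: EV | exists E].
    by exists x => n _; rewrite cE; exact: hx.
- left.
  have [A0 [oA0 [nA0 hA0]]] : exists A0, open A0 /\ A0 !=set0 /\
      forall W, B W -> W `<=` A0 -> ~ good W.
    apply: contrapT => h; apply: nQ => A oA nA; apply: contrapT => h2.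
    apply: h; exists A; split => //; split => // W BW WA gW.
    by apply: h2; exists W.
  have [V0 BV0 V0A0] := Bpi A0 oA0 nA0.
  have [oV0 nV0] := Bop _ BV0.
  have [G [oG [dG eG]]] : exists G : nat -> set T, (forall n, open (G n)) /\
      (forall n V, open V -> V !=set0 -> V `<=` V0 -> V `&` G n !=set0) /\
      V0 `&` \bigcap_n G n = set0.
    apply: contrapT => h; apply: (hA0 _ BV0 V0A0) => G oG dG.
    apply/set0P/negP => /eqP e; apply: h; exists G; split => //.
  pose sigma := fun (s : seq (set (set T))) (E : set T) =>
    if s is [::] then [set x | E = setT /\ V0 x]
    else [set x | nth set0 s (size s).-1 E /\ E x /\ G (size s).-1 x /\ V0 x].
  exists sigma => c /=.
  have a0E E : sigma (mkseq c 0) E = [set x | E = setT /\ V0 x] by [].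
  have aSE m E : sigma (mkseq c m.+1) E =
      [set x | c m E /\ E x /\ G m x /\ V0 x].
    rewrite /sigma; case e: (mkseq c m.+1) => [|s0 s'].
      by move: (size_mkseq c m.+1); rewrite e.
    by rewrite -e size_mkseq nth_mkseq.
  have aV0 n E : sigma (mkseq c n) E `<=` V0.
    by case: n => [|m]; [rewrite a0E => x []|rewrite aSE => x [_ [_ []]]].
  split.
  + move=> n hleg; case: n hleg => [|m] hleg.
      split => E.
        move=> ->; rewrite a0E.
        have -> : [set x | [set: T] = [set: T] /\ V0 x] = V0.
          by apply/seteqP; split => x /=; [case|].
        by split.
      move=> nE; rewrite a0E; apply/seteqP; split => x // [] /nE [].
    split => E.
      move=> cE; have [_ /(_ E cE) [oE nE sE]] := hleg m (ltnSn m).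
      have EV0 : E `<=` V0 by move=> x /sE [F _]; apply: aV0.
      rewrite aSE.
      have -> : [set x | c m E /\ E x /\ G m x /\ V0 x] = E `&` G m.
        apply/seteqP; split => x /=; first by case=> _ [? []].
        by case=> Ex Gx; split => //; split => //; split => //; apply: EV0.
      split; first exact: openI.
        exact: dG.
      exact: subIsetl.
    move=> nE; rewrite aSE; apply/seteqP; split => x // [] /nE [].
  + move=> hleg [x hx].
    have : (V0 `&` \bigcap_n G n) x.
      split.
        have [E cE Ex] := hx 0%N I.
        have [_ /(_ E cE) [_ _ sE]] := hleg 0%N.
        by have [F _] := sE x Ex; apply: aV0.
      move=> n _; have [E cE Ex] := hx n.+1 I.
      have [_ /(_ E cE) [_ _ sE]] := hleg n.+1.
      by have [F _] := sE x Ex; rewrite aSE => -[_ [_ []]].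
    by rewrite eG => -[].
Qed.
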